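(* Let $\mathcal{G}$ be a finite connected undirected simple graph with $N$ nodes which is not a tree, with degrees $d_1,\dots,d_N$, leading non-backtracking eigenvalue $\kappa>0$ and non-backtracking centralities $x_1,\dots,x_N$. Then the stationary distribution $\pi^{\mathrm B}=(\pi^{\mathrm B}_1,\dots,\pi^{\mathrm B}_N)$ of the NBCRW on $\mathcal{G}$ is $$\pi_i^{\mathrm B}=\left(\frac{\kappa^2-1}{\kappa}+\frac{d_i}{\kappa}\right)\frac{x_i^2}{Q},\qquad Q=\sum_{i=1}^N\left(\frac{\kappa^2-1}{\kappa}+\frac{d_i}{\kappa}\right)x_i^2 .$$
   Context: The non-backtracking matrix $\mathbf{B}$ of $\mathcal{G}$ is the $2E\times 2E$ matrix indexed by directed edges $i\to j$ (each undirected edge gives two directed edges), with $B_{i\to j,\,k\to l}=1$ if $j=k$ and $i\neq l$, and $0$ otherwise; $\kappa$ is its leading (Perron–Frobenius) eigenvalue and $v=(v_{i\to j})$ a corresponding eigenvector with non-negative entries. The non-backtracking centrality of node $i$ is $x_i=\sum_{j\in\mathcal{N}_i}v_{i\to j}$. The NBCRW on $\mathcal{G}$ (adjacency matrix $(a_{ij})$) is the Markov chain on the nodes with $p_{ij}=\dfrac{a_{ij}x_j}{\sum_{k}a_{ik}x_k}$ (assumed defined). A stationary distribution is a probability vector $\pi$ with $\pi\mathbf{P}=\pi$. *)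

(* Defs.v *)
From HB Require Import structures.
From mathcomp Require Import all_boot all_order all_algebra fingraph.
From mathcomp Require Import complex.
Set Implicit Arguments. Unset Strict Implicit. Unset Printing Implicit Defensive.
Import Order.TTheory GRing.Theory Num.Theory.
Local Open Scope ring_scope.

Definition simple_graph (T : finType) (g : rel T) : Prop :=
  symmetric g /\ irreflexive g.

Definition connected_graph (T : finType) (g : rel T) : Prop :=
  forall i j : T, connect g i j.

Definition has_cycle (T : finType) (g : rel T) : Prop :=
  exists s : seq T, [/\ (3 <= size s)%N, uniq s & cycle g s].

Definition is_tree (T : finType) (g : rel T) : Prop :=
  connected_graph g /\ ~ has_cycle g.

Definition dedge (T : finType) (g : rel T) := {p : T * T | g p.1 p.2}.

Definition nbm (R : rcfType) (T : finType) (g : rel T) (e f : dedge g) : R :=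
  (((sval e).2 == (sval f).1) && ((sval e).1 != (sval f).2))%:R.

Definition degree (T : finType) (g : rel T) (i : T) : nat := #|[set j | g i j]|.

Definition nb_centrality (R : rcfType) (T : finType) (g : rel T)
  (v : dedge g -> R) (i : T) : R :=
  \sum_(e : dedge g | (sval e).1 == i) v e.

Definition nbcrw (R : rcfType) (T : finType) (g : rel T) (x : T -> R) (i j : T) : R :=
  (g i j)%:R * x j / (\sum_k (g i k)%:R * x k).

Definition stationary (R : rcfType) (T : finType) (P : T -> T -> R) (p : T -> R) : Prop :=
  [/\ forall i, 0 <= p i, \sum_i p i = 1 & forall j, \sum_i p i * P i j = p j].

(* Main.v *)
Require Import Defs.
From HB Require Import structures.
From mathcomp Require Import all_boot all_order all_algebra fingraph.
From mathcomp Require Import complex.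
From mathcomp Require Import ring lra.
Import Order.TTheory GRing.Theory Num.Theory.
Set Implicit Arguments. Unset Strict Implicit.
Local Open Scope ring_scope.

Lemma connect_ind (T : finType) (g : rel T) (P : T -> Prop) :
  (forall a b, g a b -> P a -> P b) -> forall x y, connect g x y -> P x -> P y.
Proof.
move=> H x y /connectP [p pth ->].
elim: p x pth => //= a p IH x /andP[gxa pa] Px.
exact: (IH a pa (H _ _ gxa Px)).
Qed.

Lemma sum_dedge (R : rcfType) (T : finType) (g : rel T) (F : T -> T -> R) :
  \sum_(e : dedge g) F (sval e).1 (sval e).2 = \sum_a \sum_(b | g a b) F a b.
Proof.
rewrite pair_big_dep /=.
rewrite (reindex_omap (val : dedge g -> T * T) insub); last first.
  by move=> p hp; rewrite insubT.
by apply: eq_bigl => -[p hp] /=; rewrite insubT /= eqxx andbT hp.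
Qed.

Definition Vf (R : rcfType) (T : finType) (g : rel T) (v : dedge g -> R) (i j : T) : R :=
  if insub (i, j) is Some e then v e else 0.

Lemma VfE (R : rcfType) (T : finType) (g : rel T) (v : dedge g -> R) (e : dedge g) :
  v e = Vf v (sval e).1 (sval e).2.
Proof. by rewrite /Vf -surjective_pairing (valK e). Qed.

Lemma xE (R : rcfType) (T : finType) (g : rel T) (v : dedge g -> R) i :
  nb_centrality v i = \sum_(j | g i j) Vf v i j.
Proof.
rewrite /nb_centrality big_mkcond /=.
pose F := fun a b => if a == i then Vf v a b else 0.
rewrite (eq_bigr (fun e => F (sval e).1 (sval e).2)); last first.
  by move=> e _; rewrite /F -VfE.
rewrite sum_dedge (bigD1 i) //= [X in _ + X]big1 ?addr0.
  by apply: eq_bigr => j _; rewrite /F eqxx.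
by move=> a /negbTE Ha; rewrite big1 // => b _; rewrite /F Ha.
Qed.

Lemma eigE (R : rcfType) (T : finType) (g : rel T) (v : dedge g -> R) kappa :
  symmetric g ->
  (forall e, \sum_f nbm R e f * v f = kappa * v e) ->
  forall i j, g i j -> kappa * Vf v i j = nb_centrality v j - Vf v j i.
Proof.
move=> sym Heig i j gij.
have := Heig (exist _ (i, j) gij).
rewrite (VfE v (exist _ (i, j) gij)) /= => <-.
pose F := fun a b => ((j == a) && (i != b))%:R * Vf v a b.
rewrite (eq_bigr (fun e => F (sval e).1 (sval e).2)); last first.
  by move=> e _; rewrite /F -VfE.
rewrite sum_dedge (bigD1 j) //= [X in _ + X]big1 ?addr0; last first.
  move=> a Ha; rewrite big1 // => b _; rewrite /F eq_sym (negbTE Ha) /=.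
  by rewrite mul0r.
have gji : g j i by rewrite sym.
rewrite xE (bigD1 i) //= [in RHS](bigD1 i) //= /F !eqxx /= mul0r add0r.
rewrite addrAC subrr add0r.
by apply: eq_bigr => b /andP[_ Hb]; rewrite eq_sym Hb mul1r.
Qed.

Theorem theorem2 (R : rcfType) (T : finType) (g : rel T) (kappa : R)
    (v : dedge g -> R) :
  simple_graph g -> connected_graph g -> ~ is_tree g ->
  (* kappa is an eigenvalue of B with nonnegative (nonzero) eigenvector v *)
  (forall e, 0 <= v e) -> (exists e, v e != 0) ->
  (forall e, \sum_f nbm R e f * v f = kappa * v e) ->
  (* kappa is the leading eigenvalue: every (complex) eigenvalue has modulus <= kappa *)
  (forall (lam : complex R) (w : dedge g -> complex R), (exists e, w e != 0) ->
     (forall e, \sum_f ((nbm R e f)%:C)%C * w f = lam * w e) -> `|lam| <= (kappa%:C)%C) ->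
  0 < kappa ->
  (* the NBCRW is defined *)
  (forall i, \sum_k (g i k)%:R * nb_centrality v k != 0) ->
  let x := nb_centrality v in
  let Q := \sum_i ((kappa ^+ 2 - 1) / kappa + (degree g i)%:R / kappa) * x i ^+ 2 in
  let piB := fun i => ((kappa ^+ 2 - 1) / kappa + (degree g i)%:R / kappa) * x i ^+ 2 / Q in
  stationary (nbcrw g x) piB /\
  (forall p, stationary (nbcrw g x) p -> forall i, p i = piB i).
Proof.
move=> [sym irr] conn _ vge0 [e0 ve0] Heig _ kpos Dnz x Q piB.
have kne0 : kappa != 0 by rewrite gt_eqF.
set V := Vf v.
have Vge0 : forall i j, 0 <= V i j by move=> i j; rewrite /V /Vf; case: insub.
have xE' : forall i, x i = \sum_(j | g i j) V i j by move=> i; rewrite /x xE.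
have HE : forall i j, g i j -> kappa * V i j = x j - V j i := eigE sym Heig.
have xge0 : forall i, 0 <= x i by move=> i; rewrite xE'; apply: sumr_ge0.
pose D i := \sum_k (g i k)%:R * x k.
have DE : forall i, D i = \sum_(k | g i k) x k.
  move=> i; rewrite /D [RHS]big_mkcond /=; apply: eq_bigr => k _.
  by case: (g i k); rewrite ?mul1r ?mul0r.
pose y i := \sum_(j | g i j) V j i.
have DE2 : forall i, D i = kappa * x i + y i.
  move=> i; rewrite DE xE' mulr_sumr /y -big_split; apply: eq_bigr => j gij /=.
  by rewrite HE // subrK.
have YE : forall i, kappa * y i = ((degree g i)%:R - 1) * x i.
  move=> i; have H : kappa * y i + x i = (degree g i)%:R * x i.
    rewrite /y [in LHS]xE' mulr_sumr -big_split.
    rewrite (eq_bigr (fun _ => x i)); last by move=> j gij /=; rewrite HE; [rewrite subrK | rewrite sym].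
    rewrite (eq_bigl (fun j => j \in [set j | g i j])); last by move=> j; rewrite inE.
    by rewrite sumr_const /degree mulr_natl.
  by rewrite mulrBl mul1r -H addrK.
have cE : forall i, ((kappa ^+ 2 - 1) / kappa + (degree g i)%:R / kappa) * x i = D i.
  move=> i; rewrite DE2.
  have -> : y i = ((degree g i)%:R - 1) * x i / kappa.
    by apply: (mulfI kne0); rewrite YE; field.
  by field.
have QE : Q = \sum_i D i * x i.
  by rewrite /Q; apply: eq_bigr => i _; rewrite expr2 mulrA cE.
have piBE : forall i, piB i = D i * x i / Q.
  by move=> i; rewrite /piB expr2 mulrA cE.
have Dpos : forall i, 0 < D i.
  move=> i; rewrite lt_def; apply/andP; split; first exact: Dnz i.
  by apply: sumr_ge0 => k _; apply: mulr_ge0 => //; apply: xge0.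
pose i0 := (sval e0).1.
have vpos : 0 < v e0 by rewrite lt_def ve0 vge0.
have xi0pos : 0 < x i0.
  rewrite /x /nb_centrality (bigD1 e0) //=; apply: (lt_le_trans vpos).
  by rewrite lerDl sumr_ge0.
have xpos : forall i, 0 < x i.
  move=> i; rewrite lt_def xge0 andbT; apply/eqP => xi0'.
  have cl : forall a b, g a b -> x a = 0 -> x b = 0.
    move=> a b gab xa.
    have xa' := xa; rewrite xE' in xa'.
    have Vab : V a b = 0 := psumr_eq0P (fun j _ => Vge0 a j) xa' gab.
    have Vba : V b a = 0.
      have := HE b a; rewrite sym => /(_ gab); rewrite xa Vab subrr => /eqP.
      by rewrite mulf_eq0 (negbTE kne0) /= => /eqP.
    by have := HE a b gab; rewrite Vab Vba mulr0 subr0 => <-.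
  have := connect_ind (P := fun a => x a = 0) cl (conn i i0) xi0'.
  by move=> h; rewrite h ltxx in xi0pos.
have xne0 : forall i, x i != 0 by move=> i; rewrite gt_eqF.
have Dne0 : forall i, D i != 0 by move=> i; rewrite gt_eqF.
have Qpos : 0 < Q.
  rewrite QE (bigD1 i0) //=; apply: (lt_le_trans (mulr_gt0 (Dpos i0) (xpos i0))).
  rewrite lerDl sumr_ge0 // => i _; apply: mulr_ge0; [exact: ltW (Dpos i) | exact: xge0].
have Qne0 : Q != 0 by rewrite gt_eqF.
have stat : stationary (nbcrw g x) piB.
  split.
  - move=> i; rewrite piBE; apply: divr_ge0 (ltW Qpos).
    exact: mulr_ge0 (ltW (Dpos i)) (xge0 i).
  - under eq_bigr => i _ do rewrite piBE.
    by rewrite -mulr_suml -QE divff.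
  - move=> j; rewrite piBE.
    transitivity (\sum_i (g j i)%:R * x i * (x j / Q)).
      apply: eq_bigr => i _; rewrite piBE /nbcrw -/(D i) [g i j]sym.
      by field; rewrite Dne0 Qne0.
    by rewrite -mulr_suml -/(D j) mulrA.
split; first exact: stat.
move=> p [pge0 psum pbal] i.
pose r a := p a / (D a * x a).
have uz : forall a, D a * x a != 0 by move=> a; rewrite mulf_neq0.
have pr : forall a, p a = r a * (D a * x a) by move=> a; rewrite /r divfK.
have [j _ Hj] := @arg_maxP _ _ T i0 xpredT r isT.
have cl : forall a b, g a b -> r a = r j -> r b = r j.
  move=> a b gab ra.
  have H1 : \sum_k (g a k)%:R * x k * r k = r a * D a.
    apply: (mulfI (xne0 a)).
    transitivity (r a * (D a * x a)); last by ring.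
    rewrite -pr -[in RHS](pbal a) mulr_sumr; apply: eq_bigr => k _.
    rewrite [p k]pr /nbcrw -/(D k) [g k a]sym.
    by field.
  have H0 : \sum_k (g a k)%:R * x k * (r a - r k) = 0.
    under eq_bigr => k _ do rewrite mulrBr.
    by rewrite sumrB H1 -mulr_suml -/(D a) mulrC subrr.
  have nn : forall k, xpredT k -> 0 <= (g a k)%:R * x k * (r a - r k).
    move=> k _; apply: mulr_ge0; first exact: mulr_ge0 (ler0n _ _) (xge0 k).
    by rewrite subr_ge0 ra; exact: Hj.
  have := psumr_eq0P nn H0 (isT : xpredT b).
  rewrite gab mul1r => /eqP; rewrite mulf_eq0 (negbTE (xne0 b)) /= subr_eq0.
  by move=> /eqP <-.
have rc : forall a, r a = r j.
  by move=> a; apply: (connect_ind (P := fun a => r a = r j) cl (conn j a)).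
have m : r j = Q^-1.
  have H := psum; rewrite (eq_bigr (fun a => r j * (D a * x a))) in H; last first.
    by move=> a _; rewrite pr rc.
  rewrite -mulr_sumr -QE in H.
  by apply: (mulIf Qne0); rewrite H mulVf.
by rewrite pr rc m piBE mulrC.
Qed.
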